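(* Let $f:\mathbb{R}^2\to\mathbb{R}^2$ be a Topologically Anosov homeomorphism and let $x\in\mathbb{R}^2$ satisfy $\alpha(x)=\emptyset$. Then $\omega(x)\neq\emptyset$.
   Context: A homeomorphism $f:\mathbb{R}^2\to\mathbb{R}^2$ is Topologically Anosov (TA) if: (i) there is a continuous strictly positive $\epsilon:\mathbb{R}^2\to\mathbb{R}$ such that for all $x\neq y$ there is $k\in\mathbb{Z}$ with $\|f^k(x)-f^k(y)\|>\epsilon(f^k(x))$; and (ii) for every continuous strictly positive $\epsilon$ there is a continuous strictly positive $\delta$ such that every $\delta$-pseudo-orbit is $\epsilon$-shadowed by an orbit. A $\delta$-pseudo-orbit is a sequence $(x_n)_{n\in\mathbb{Z}}$ with $\|f(x_n)-x_{n+1}\|<\delta(f(x_n))$; it is $\epsilon$-shadowed by the orbit of $x$ if $\|x_n-f^n(x)\|<\epsilon(x_n)$ for all $n$. $\alpha(x),\omega(x)$ are the $\alpha$- and $\omega$-limit sets. *)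

(* Defs.v *)
From Stdlib Require Import Reals ZArith.
Open Scope R_scope.

Definition pt := (R * R)%type.

Definition dist2 (p q : pt) : R :=
  sqrt ((fst p - fst q) ^ 2 + (snd p - snd q) ^ 2).

Definition cont_pp (f : pt -> pt) : Prop :=
  forall x e, 0 < e -> exists d, 0 < d /\
    forall y, dist2 x y < d -> dist2 (f x) (f y) < e.

Definition cont_pr (h : pt -> R) : Prop :=
  forall x e, 0 < e -> exists d, 0 < d /\
    forall y, dist2 x y < d -> Rabs (h x - h y) < e.

Definition pos_cont (h : pt -> R) : Prop := cont_pr h /\ forall x, 0 < h x.

Definition homeo_pair (f g : pt -> pt) : Prop :=
  cont_pp f /\ cont_pp g /\ (forall x, g (f x) = x) /\ (forall x, f (g x) = x).

Definition iterZ (f g : pt -> pt) (k : Z) (x : pt) : pt :=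
  match k with
  | Z0 => x
  | Zpos p => Nat.iter (Pos.to_nat p) f x
  | Zneg p => Nat.iter (Pos.to_nat p) g x
  end.

Definition expansive (f g : pt -> pt) : Prop :=
  exists eps : pt -> R, pos_cont eps /\
    forall x y, x <> y -> exists k : Z,
      dist2 (iterZ f g k x) (iterZ f g k y) > eps (iterZ f g k x).

Definition pseudo_orbit (f : pt -> pt) (delta : pt -> R) (xs : Z -> pt) : Prop :=
  forall n : Z, dist2 (f (xs n)) (xs (n + 1)%Z) < delta (f (xs n)).

Definition shadowed (f g : pt -> pt) (eps : pt -> R) (xs : Z -> pt) (x : pt) : Prop :=
  forall n : Z, dist2 (xs n) (iterZ f g n x) < eps (xs n).

Definition shadowing (f g : pt -> pt) : Prop :=
  forall eps : pt -> R, pos_cont eps ->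
    exists delta : pt -> R, pos_cont delta /\
      forall xs : Z -> pt, pseudo_orbit f delta xs ->
        exists x, shadowed f g eps xs x.

Definition TA (f g : pt -> pt) : Prop :=
  homeo_pair f g /\ expansive f g /\ shadowing f g.

Definition omega_limit (f g : pt -> pt) (x : pt) (y : pt) : Prop :=
  forall e, 0 < e -> forall N : Z, exists n : Z,
    (N <= n)%Z /\ dist2 (iterZ f g n x) y < e.

Definition alpha_limit (f g : pt -> pt) (x : pt) (y : pt) : Prop :=
  forall e, 0 < e -> forall N : Z, exists n : Z,
    (n <= N)%Z /\ dist2 (iterZ f g n x) y < e.

(* Main.v *)
Require Import Defs.
From Stdlib Require Import Reals ZArith.
From Stdlib Require Import Lra Lia Psatz Classical ClassicalEpsilon.
Open Scope R_scope.

Lemma d_nonneg p q : 0 <= dist2 p q.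
Proof. unfold dist2; apply sqrt_pos. Qed.

Lemma d_sym p q : dist2 p q = dist2 q p.
Proof. unfold dist2; f_equal; ring. Qed.

Lemma d_refl p : dist2 p p = 0.
Proof. unfold dist2. replace ((fst p - fst p) ^ 2 + (snd p - snd p) ^ 2) with 0 by ring.
  apply sqrt_0. Qed.

Lemma d_zero p q : dist2 p q = 0 -> p = q.
Proof.
  unfold dist2; intro H. destruct p as [a b], q as [c d]; simpl in *.
  assert (H0 : 0 <= (a - c) ^ 2 + (b - d) ^ 2) by (apply Rplus_le_le_0_compat; apply pow2_ge_0).
  apply (sqrt_eq_0 _ H0) in H.
  assert (h1 := pow2_ge_0 (a - c)). assert (h2 := pow2_ge_0 (b - d)).
  assert (e1 : (a - c) ^ 2 = 0) by lra. assert (e2 : (b - d) ^ 2 = 0) by lra.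
  rewrite <- Rsqr_pow2 in e1, e2. apply Rsqr_0_uniq in e1. apply Rsqr_0_uniq in e2.
  assert (a = c) by lra. assert (b = d) by lra. subst; auto.
Qed.

Lemma d_tri p q r : dist2 p r <= dist2 p q + dist2 q r.
Proof.
  unfold dist2.
  set (a1 := fst p - fst q). set (a2 := snd p - snd q).
  set (b1 := fst q - fst r). set (b2 := snd q - snd r).
  replace (fst p - fst r) with (a1 + b1) by (unfold a1, b1; ring).
  replace (snd p - snd r) with (a2 + b2) by (unfold a2, b2; ring).
  set (A := a1 ^ 2 + a2 ^ 2). set (B := b1 ^ 2 + b2 ^ 2).
  assert (HA : 0 <= A) by (unfold A; apply Rplus_le_le_0_compat; apply pow2_ge_0). assert (HB : 0 <= B) by (unfold B; apply Rplus_le_le_0_compat; apply pow2_ge_0).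
  assert (sA := sqrt_pos A). assert (sB := sqrt_pos B).
  assert (eA := sqrt_sqrt A HA). assert (eB := sqrt_sqrt B HB).
  rewrite <- (sqrt_pow2 (sqrt A + sqrt B)) by lra.
  apply sqrt_le_1_alt.
  assert (HC : (a1 * b1 + a2 * b2) ^ 2 <= A * B).
  { assert (E : A * B - (a1 * b1 + a2 * b2) ^ 2 = (a1 * b2 - a2 * b1) ^ 2) by (unfold A, B; ring).
    assert (h := pow2_ge_0 (a1 * b2 - a2 * b1)). lra. }
  assert (a1 * b1 + a2 * b2 <= sqrt A * sqrt B).
  { destruct (Rle_lt_dec (a1 * b1 + a2 * b2) (sqrt A * sqrt B)) as [h|h]; auto.
    exfalso. assert (0 <= sqrt A * sqrt B) by nra.
    assert (E2 : (sqrt A * sqrt B) ^ 2 = A * B).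
    { replace ((sqrt A * sqrt B) ^ 2) with ((sqrt A * sqrt A) * (sqrt B * sqrt B)) by ring.
      rewrite eA, eB; ring. }
    nra. }
  replace ((sqrt A + sqrt B) ^ 2) with (sqrt A * sqrt A + sqrt B * sqrt B + 2 * (sqrt A * sqrt B)) by ring.
  rewrite eA, eB.
  replace ((a1 + b1) ^ 2 + (a2 + b2) ^ 2) with (A + B + 2 * (a1 * b1 + a2 * b2)) by (unfold A, B; ring).
  lra.
Qed.

Lemma cont_comp (f h : pt -> pt) : cont_pp f -> cont_pp h -> cont_pp (fun p => f (h p)).
Proof.
  intros Hf Hh p e He. destruct (Hf (h p) e He) as [d1 [Hd1 H1]].
  destruct (Hh p d1 Hd1) as [d2 [Hd2 H2]]. exists d2; split; auto.
Qed.

Lemma cont_iter (f : pt -> pt) n : cont_pp f -> cont_pp (Nat.iter n f).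
Proof.
  intro Hf. induction n as [|n IH]; simpl.
  - intros p e He. exists e; split; auto.
  - apply (cont_comp f (Nat.iter n f)); auto.
Qed.

Lemma iter_inv (f g : pt -> pt) n p : (forall z, f (g z) = z) ->
  Nat.iter n f (Nat.iter n g p) = p.
Proof.
  intro H. revert p. induction n as [|n IH]; intro p; [reflexivity|].
  change (Nat.iter (S n) g p) with (g (Nat.iter n g p)).
  rewrite Nat.iter_succ_r, H. apply IH.
Qed.

Lemma iterZ_pos f g n p : iterZ f g (Z.of_nat n) p = Nat.iter n f p.
Proof. destruct n; simpl; auto. rewrite SuccNat2Pos.id_succ; auto. Qed.

Lemma iterZ_neg f g n p : iterZ f g (- Z.of_nat n) p = Nat.iter n g p.
Proof. destruct n; simpl; auto. rewrite SuccNat2Pos.id_succ; auto. Qed.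

Lemma iterZ_succ f g n p : (forall z, f (g z) = z) ->
  f (iterZ f g n p) = iterZ f g (n + 1) p.
Proof.
  intro H. destruct (Z_lt_le_dec n 0) as [h|h].
  - replace n with (- Z.of_nat (S (Z.to_nat (- n - 1))))%Z by lia.
    replace (- Z.of_nat (S (Z.to_nat (- n - 1))) + 1)%Z with (- Z.of_nat (Z.to_nat (- n - 1)))%Z by lia.
    rewrite !iterZ_neg. simpl. apply H.
  - replace n with (Z.of_nat (Z.to_nat n)) by lia.
    replace (Z.of_nat (Z.to_nat n) + 1)%Z with (Z.of_nat (S (Z.to_nat n))) by lia.
    rewrite !iterZ_pos. reflexivity.
Qed.

Definition EE (s : nat -> pt) (c : nat -> R) (p : pt) : R -> Prop :=
  fun v => exists j, v = - (Rabs (c j) + dist2 p (s j)).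

Lemma EE_bound s c p : bound (EE s c p).
Proof.
  exists 0. intros v [j ->]. assert (h1 := Rabs_pos (c j)). assert (h2 := d_nonneg p (s j)). lra.
Qed.

Lemma EE_ne s c p : exists v, EE s c p v.
Proof. exists (- (Rabs (c 0%nat) + dist2 p (s 0%nat))). exists 0%nat; auto. Qed.

Definition infd s c p : R := - proj1_sig (completeness _ (EE_bound s c p) (EE_ne s c p)).

Lemma infd_le s c p j : infd s c p <= Rabs (c j) + dist2 p (s j).
Proof.
  unfold infd. destruct (completeness _ _ _) as [m [Hm1 Hm2]]. simpl.
  assert (Hj : EE s c p (- (Rabs (c j) + dist2 p (s j)))) by (exists j; auto).
  apply Hm1 in Hj. lra.
Qed.

Lemma infd_ge s c p L : (forall j, L <= Rabs (c j) + dist2 p (s j)) -> L <= infd s c p.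
Proof.
  intro H. unfold infd. destruct (completeness _ _ _) as [m [Hm1 Hm2]]. simpl.
  assert (m <= - L); [|lra]. apply Hm2. intros v [j ->]. specialize (H j). lra.
Qed.

Lemma infd_lip s c p q : infd s c p - dist2 p q <= infd s c q.
Proof.
  apply infd_ge. intro j. assert (h1 := infd_le s c p j). assert (h2 := d_tri p q (s j)). lra.
Qed.

Lemma finite_min (c : nat -> R) J : (forall j, 0 < c j) -> exists L, 0 < L /\ forall j, (j < J)%nat -> L <= c j.
Proof.
  intro Hc. induction J as [|J [L [HL H]]].
  - exists 1; split; [lra|]. intros j Hj; lia.
  - exists (Rmin L (c J)). split. { apply Rmin_pos; auto. }
    intros j Hj. destruct (Nat.eq_dec j J) as [->|hn].
    + apply Rmin_r.
    + eapply Rle_trans; [apply Rmin_l|]. apply H; lia.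
Qed.

Lemma infd_pos s c p : (forall j, 0 < c j) ->
  (exists e, 0 < e /\ exists J, forall j, (J <= j)%nat -> e <= dist2 p (s j)) ->
  0 < infd s c p.
Proof.
  intros Hc [e [He [J HJ]]]. destruct (finite_min c J Hc) as [L [HL H]].
  apply Rlt_le_trans with (Rmin e L). { apply Rmin_pos; auto. }
  apply infd_ge. intro j. assert (h1 := Rabs_pos (c j)). assert (h2 := d_nonneg p (s j)).
  destruct (le_lt_dec J j) as [h|h].
  - specialize (HJ j h). assert (h3 := Rmin_l e L). lra.
  - specialize (H j h). assert (h3 := Rmin_r e L). rewrite Rabs_right by (specialize (Hc j); lra). lra.
Qed.

Lemma not_alpha f g x p : ~ alpha_limit f g x p ->
  exists e, 0 < e /\ exists N, forall n, (n <= N)%Z -> e <= dist2 (iterZ f g n x) p.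
Proof.
  intro H. apply NNPP; intro H1; apply H; intros e He N.
  apply NNPP; intro H2; apply H1; exists e; split; auto; exists N; intros n Hn.
  apply Rnot_lt_le; intro H3; apply H2; exists n; auto.
Qed.

Lemma not_omega f g x p : ~ omega_limit f g x p ->
  exists e, 0 < e /\ exists N, forall n, (N <= n)%Z -> e <= dist2 (iterZ f g n x) p.
Proof.
  intro H. apply NNPP; intro H1; apply H; intros e He N.
  apply NNPP; intro H2; apply H1; exists e; split; auto; exists N; intros n Hn.
  apply Rnot_lt_le; intro H3; apply H2; exists n; auto.
Qed.

Definition r (k : nat) : R := / (INR k + 1).

Lemma r_pos k : 0 < r k.
Proof. unfold r. apply Rinv_0_lt_compat. assert (h := pos_INR k). lra. Qed.

Lemma r_arch a : 0 < a -> exists k, r k < a.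
Proof.
  intro Ha. destruct (INR_archimed a 1 Ha) as [n Hn]. exists n. unfold r.
  assert (h := pos_INR n).
  replace a with (a * (INR n + 1) * / (INR n + 1)) by (field; lra).
  rewrite <- (Rmult_1_l (/ (INR n + 1))) at 1.
  apply Rmult_lt_compat_r; [apply Rinv_0_lt_compat; lra| nra].
Qed.

Lemma r_mono j J : (J <= j)%nat -> r j <= r J.
Proof.
  intro h. unfold r. apply Rinv_le_contravar. { assert (h1 := pos_INR J). lra. }
  apply le_INR in h. lra.
Qed.

Lemma choice_nat (P : nat -> R -> Prop) : (forall k, exists t, P k t) -> exists h : nat -> R, forall k, P k (h k).
Proof.
  intro H. exists (fun k => proj1_sig (constructive_indefinite_description _ (H k))).
  intro k. exact (proj2_sig (constructive_indefinite_description _ (H k))).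
Qed.

Theorem mainTheorem10 (f g : pt -> pt) (x : pt) :
  TA f g ->
  (forall y, ~ alpha_limit f g x y) ->
  exists y, omega_limit f g x y.
Proof.
  intros [[Hf [Hg [Hgf Hfg]]] [_ Hsh]] Hna.
  apply NNPP; intro Hno.
  assert (Hnw : forall y, ~ omega_limit f g x y) by (intros y Hy; apply Hno; exists y; auto).
  assert (Hc1 : forall k, exists c, 0 < c /\ forall z, dist2 (Nat.iter (S k) g x) z < c ->
                 dist2 x (Nat.iter (S k) f z) < r k).
  { intro k. destruct (cont_iter f (S k) Hf (Nat.iter (S k) g x) (r k) (r_pos k)) as [d [Hd H]].
    exists d; split; auto. intros z Hz. specialize (H z Hz). rewrite iter_inv in H by auto. auto. }
  destruct (choice_nat _ Hc1) as [c1 Hc1'].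
  assert (Hs : forall k, exists s, 0 < s /\ forall q, dist2 (Nat.iter (S k) f x) q < s ->
                 dist2 x (Nat.iter (S k) g q) < r k).
  { intro k. destruct (cont_iter g (S k) Hg (Nat.iter (S k) f x) (r k) (r_pos k)) as [d [Hd H]].
    exists d; split; auto. intros z Hz. specialize (H z Hz). rewrite iter_inv in H by auto. auto. }
  destruct (choice_nat _ Hs) as [sg Hsg].
  set (b := fun k => Rmin (sg k) (r k) / 2).
  assert (Hb : forall k, 0 < b k /\ b k < sg k /\ b k <= r k / 2).
  { intro k. unfold b. assert (h1 := Rmin_l (sg k) (r k)). assert (h2 := Rmin_r (sg k) (r k)).
    assert (h3 : 0 < Rmin (sg k) (r k)) by (apply Rmin_pos; [apply Hsg | apply r_pos]). lra. }
  set (q := fun k => (fst (Nat.iter (S k) f x) + b k, snd (Nat.iter (S k) f x))).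
  assert (Hq : forall k, dist2 (Nat.iter (S k) f x) (q k) = b k).
  { intro k. unfold dist2, q. cbn [fst snd]. set (P := Nat.iter (S k) f x).
    replace ((fst P - (fst P + b k)) ^ 2 + (snd P - snd P) ^ 2) with (b k ^ 2) by ring.
    apply sqrt_pow2. destruct (Hb k); lra. }
  set (x' := fun k => Nat.iter (S k) g (q k)).
  assert (Hx'1 : forall k, dist2 x (x' k) < r k).
  { intro k. unfold x'. apply Hsg. rewrite Hq. apply Hb. }
  set (a := fun k => dist2 x (x' k)).
  assert (Ha : forall k, 0 < a k).
  { intro k. assert (h := d_nonneg x (x' k)). unfold a. destruct (Rle_lt_or_eq_dec _ _ h) as [h1|h1]; auto.
    exfalso. symmetry in h1. apply d_zero in h1.
    assert (E : q k = Nat.iter (S k) f x).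
    { rewrite h1. unfold x'. rewrite iter_inv by auto. auto. }
    specialize (Hq k). rewrite E, d_refl in Hq. destruct (Hb k); lra. }
  assert (Ht : forall k, exists t, 0 < t /\ forall z, dist2 (q k) z < t ->
                 dist2 (x' k) (Nat.iter (S k) g z) < a k / 2).
  { intro k. assert (hk := Ha k).
    destruct (cont_iter g (S k) Hg (q k) (a k / 2) ltac:(lra)) as [d [Hd H]].
    exists d; split; auto. }
  destruct (choice_nat _ Ht) as [t Ht'].
  set (s1 := fun k => Nat.iter (S k) g x).
  set (eps := fun p => Rmin (infd s1 c1 p) (infd q t p)).
  assert (Heps : pos_cont eps).
  { split.
    - intros p e He. exists e; split; auto. intros y Hy.
      assert (h1 := infd_lip s1 c1 p y). assert (h2 := infd_lip s1 c1 y p).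
      assert (h3 := infd_lip q t p y). assert (h4 := infd_lip q t y p).
      rewrite d_sym in h2, h4. apply Rabs_def1; unfold eps, Rmin;
        destruct (Rle_dec _ _); destruct (Rle_dec _ _); lra.
    - intro p. unfold eps. apply Rmin_pos; apply infd_pos.
      + intro j; apply Hc1'.
      + destruct (not_alpha _ _ _ _ (Hna p)) as [e [He [N HN]]].
        exists e; split; auto. exists (Z.to_nat (- N)). intros j Hj.
        specialize (HN (- Z.of_nat (S j))%Z ltac:(lia)). rewrite iterZ_neg in HN.
        rewrite d_sym. auto.
      + intro j; apply Ht'.
      + destruct (not_omega _ _ _ _ (Hnw p)) as [e [He [N HN]]].
        destruct (r_arch (e / 2) ltac:(lra)) as [k0 Hk0].
        exists (e / 2); split; [lra|]. exists (max k0 (Z.to_nat N)). intros j Hj.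
        specialize (HN (Z.of_nat (S j)) ltac:(lia)). rewrite iterZ_pos in HN.
        assert (h1 := d_tri p (q j) (Nat.iter (S j) f x)).
        rewrite (d_sym (q j)), Hq, d_sym in h1.
        assert (h2 := r_mono j k0 ltac:(lia)). destruct (Hb j) as [_ [_ h3]]. lra. }
  destruct (Hsh eps Heps) as [delta [[_ Hdpos] Hdelta]].
  destruct (Hf x (delta (f x)) (Hdpos (f x))) as [eta [Heta Hfx]].
  destruct (r_arch eta Heta) as [k Hk].
  destruct (r_arch (a k / 2) ltac:(specialize (Ha k); lra)) as [m Hm].
  set (xs := fun n => if (n <=? 0)%Z then iterZ f g n x else iterZ f g n (x' k)).
  assert (Hps : pseudo_orbit f delta xs).
  { intro n. unfold xs. destruct (Z_lt_le_dec n 0) as [h|h].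
    - rewrite (proj2 (Z.leb_le n 0)) by lia. rewrite (proj2 (Z.leb_le (n + 1) 0)) by lia.
      rewrite iterZ_succ by auto. rewrite d_refl. apply Hdpos.
    - destruct (Z.eq_dec n 0) as [->|hn].
      + simpl. apply Hfx. specialize (Hx'1 k). lra.
      + rewrite (proj2 (Z.leb_gt n 0)) by lia. rewrite (proj2 (Z.leb_gt (n + 1) 0)) by lia.
        rewrite iterZ_succ by auto. rewrite d_refl. apply Hdpos. }
  destruct (Hdelta xs Hps) as [y Hy].
  assert (HA := Hy (Z.of_nat (S k))). unfold xs in HA.
  rewrite (proj2 (Z.leb_gt (Z.of_nat (S k)) 0)) in HA by lia.
  rewrite !iterZ_pos in HA. unfold x' in HA at 1 2. rewrite iter_inv in HA by auto.
  assert (HA2 : eps (q k) <= t k).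
  { unfold eps. eapply Rle_trans; [apply Rmin_r|]. eapply Rle_trans; [apply (infd_le q t (q k) k)|].
    rewrite d_refl. rewrite Rabs_right by (specialize (Ht' k); lra). lra. }
  assert (HA3 : dist2 (x' k) y < a k / 2).
  { assert (h := proj2 (Ht' k) (Nat.iter (S k) f y) ltac:(lra)). rewrite iter_inv in h by auto. auto. }
  assert (HB := Hy (- Z.of_nat (S m))%Z). unfold xs in HB.
  rewrite (proj2 (Z.leb_le (- Z.of_nat (S m)) 0)) in HB by lia.
  rewrite !iterZ_neg in HB.
  assert (HB2 : eps (s1 m) <= c1 m).
  { unfold eps. eapply Rle_trans; [apply Rmin_l|]. eapply Rle_trans; [apply (infd_le s1 c1 (s1 m) m)|].
    rewrite d_refl. rewrite Rabs_right by (specialize (Hc1' m); lra). lra. }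
  assert (HB3 : dist2 x y < r m).
  { assert (h := proj2 (Hc1' m) (Nat.iter (S m) g y) ltac:(unfold s1 in HB2; lra)).
    rewrite iter_inv in h by auto. auto. }
  assert (h := d_tri x y (x' k)). rewrite (d_sym y) in h. unfold a in *. lra.
Qed.
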